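(* Let $k,m$ be positive integers, let $N(\mu_1,I+\Sigma_1),\dots,N(\mu_k,I+\Sigma_k)$ be Gaussians on $\mathbb{R}^d$, and let $P_1,\dots,P_k$ be real polynomials in $X=(X_1,\dots,X_d)$ of degree at most $m$. Let \[f(X,y)=\sum_{j=1}^kP_j(Xy)e^{\mu_j(X)y+\frac12\Sigma_j(X)y^2}=\sum_{r\ge0}\frac{f_r(X)}{r!}y^r.\] Let $\kappa=(m+1)(2^k-1)$. Then there are polynomials $R_{j,l}(X)$ in $d$ variables, for $0\le j\le\kappa$ and $0\le l\le\kappa-j$, such that: (1) $R_{j,l}$ is homogeneous of degree $\kappa-j+l$, and $R_{\kappa,0}=1$; (2) each $R_{j,l}$ is $(A,B)$-simple with respect to $\{\mu_1(X),\Sigma_1(X),\dots,\mu_k(X),\Sigma_k(X)\}$ for some $A,B$ depending only on $k,m$; (3) for all integers $a\ge\kappa$, \[\sum_{j=0}^{\kappa}\sum_{l=0}^{\kappa-j}\frac{f_{a-\kappa+j-l}(X)\,R_{j,l}(X)}{(a-\kappa-l)!}=0,\] where terms with a negative factorial in the denominator are treated as $0$.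
   Context: $\mu(X)=\mu^TX$, $\Sigma(X)=X^T\Sigma X$, and $Xy=(X_1y,\dots,X_dy)$. $f(X,y)$ is regarded as a formal power series in $y$ whose coefficients are polynomials in $X$; the $f_r$ are its primary terms. Given a family $\mathcal{S}$ of polynomials in $X$, a polynomial $Q(X)$ is $(A,B)$-simple with respect to $\mathcal{S}$ if it is a linear combination of at most $A$ terms, all coefficients of magnitude at most $A$, each term a product of at most $B$ polynomials from $\mathcal{S}$. *)

(* Defs.v *)
From HB Require Import structures.
From mathcomp Require Import all_boot all_order all_algebra.
From mathcomp Require Import mpoly.
From mathcomp Require Import reals.

Set Implicit Arguments.
Unset Strict Implicit.
Unset Printing Implicit Defensive.

Import Order.TTheory GRing.Theory Num.Theory.
Local Open Scope ring_scope.

Section Defs.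
Variables (R : realType) (d : nat).

Definition muX (mu : 'cV[R]_d) : {mpoly R[d]} :=
  \sum_(i < d) mu i ord0 *: 'X_i.

Definition SigmaX (S : 'M[R]_d) : {mpoly R[d]} :=
  \sum_(i < d) \sum_(j < d) S i j *: ('X_i * 'X_j).

(* Formal power series in y with coefficients in R[X_1..X_d]:
   s r = coefficient of y^r. *)
Definition fps := nat -> {mpoly R[d]}.

Definition fps_mul (s t : fps) : fps :=
  fun r => \sum_(i < r.+1) s i * t (r - i)%N.

Definition fps_one : fps := fun r => if r == 0%N then 1 else 0.

Fixpoint fps_pow (s : fps) (n : nat) : fps :=
  match n with 0%N => fps_one | n'.+1 => fps_mul s (fps_pow s n') end.

(* exp(s) = sum_n s^n / n!, for s with zero constant term (then s^n has
   y-valuation >= n, so only n <= r contributes to the coefficient of y^r). *)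
Definition fps_exp (s : fps) : fps :=
  fun r => \sum_(n < r.+1) (n`!%:R)^-1 *: fps_pow s n r.

(* The polynomial P(Xy) = P(X_1 y,...,X_d y), as a polynomial in y with
   coefficients in R[X], obtained by substituting X_i := X_i * y. *)
Definition subst_Xy (P : {mpoly R[d]}) : {poly {mpoly R[d]}} :=
  mmap (fun c : R => (c%:MP)%:P) (fun i : 'I_d => 'X_i *: 'X) P.

Definition fps_of_poly (p : {poly {mpoly R[d]}}) : fps := fun r => p`_r.

Definition fseries (k : nat) (mu : 'I_k -> 'cV[R]_d) (Sig : 'I_k -> 'M[R]_d)
  (P : 'I_k -> {mpoly R[d]}) : fps :=
  fun r => \sum_(j < k)
    fps_mul (fps_of_poly (subst_Xy (P j)))
      (fps_exp (fun t => if t == 1%N then muX (mu j)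
                         else if t == 2%N then 2^-1 *: SigmaX (Sig j)
                         else 0)) r.

(* f(X,y) = sum_r f_r(X)/r! y^r, so f_r = r! * [y^r] f *)
Definition fcoef k mu Sig P (r : nat) : {mpoly R[d]} :=
  r`!%:R *: @fseries k mu Sig P r.

(* (A,B)-simple w.r.t. the family S: a linear combination of at most A terms,
   all coefficients of magnitude at most A, each term a product of at most B
   polynomials from S (a term is given by a list of indices into S). *)
Definition simple (A B : nat) (S : seq {mpoly R[d]}) (Q : {mpoly R[d]}) :=
  exists terms : seq (R * seq 'I_(size S)),
    [/\ (size terms <= A)%N,
        all (fun t => `|t.1| <= A%:R) terms,
        all (fun t => size t.2 <= B)%N terms &
        Q = \sum_(t <- terms) t.1 *: \prod_(i <- t.2) S`_i].

Definition gauss_family k (mu : 'I_k -> 'cV[R]_d) (Sig : 'I_k -> 'M[R]_d)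
  : seq {mpoly R[d]} :=
  flatten [seq [:: muX (mu j); SigmaX (Sig j)] | j <- enum 'I_k].

End Defs.

(* Main.v *)
Require Import Defs.
From HB Require Import structures.
From mathcomp Require Import all_boot all_order all_algebra.
From mathcomp Require Import mpoly.
From mathcomp Require Import reals.
From mathcomp Require Import ring zify.

Set Implicit Arguments.
Unset Strict Implicit.
Unset Printing Implicit Defensive.
Import Order.TTheory GRing.Theory Num.Theory.
Local Open Scope ring_scope.

Section Part1.
Variables (R : realType) (d : nat).
Local Notation M := {mpoly R[d]}.

Lemma sum_ext_zero (V : nmodType) (n N : nat) (F : nat -> V) :
  (n <= N)%N -> (forall i, (n <= i)%N -> (i < N)%N -> F i = 0) ->
  \sum_(i < n) F i = \sum_(i < N) F i.
Proof.
move=> leN hF; rewrite -!(big_mkord xpredT F) (@big_cat_nat _ _ _ n 0 N) //=.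
rewrite [X in _ = _ + X]big_nat_cond [X in _ = _ + X]big1 ?addr0 //.
by move=> i /andP[/andP[h1 h2] _]; apply: hF.
Qed.

Definition Gp (mu sig : M) : {poly M} := mu%:P + sig%:P * 'X.

Section Exp.
Variables (mu h : M).
Definition sfps : fps R d := fun t => if t == 1%N then mu else if t == 2%N then h else 0.
Definition Sp : {poly M} := mu%:P * 'X + h%:P * 'X^2.

Lemma Sp_coef i : Sp`_i = sfps i.
Proof.
rewrite /Sp /sfps coefD !coefCM coefX coefXn.
by case: i => [|[|[|i]]] /=; rewrite ?mulr0 ?mulr1 ?addr0 ?add0r.
Qed.

Lemma pow_coef n r : fps_pow sfps n r = (Sp ^+ n)`_r.
Proof.
elim: n r => [|n IH] r /=.
  by rewrite /fps_one expr0 coefC.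
rewrite /fps_mul exprS coefM; apply: eq_bigr => i _.
by rewrite IH Sp_coef.
Qed.

Lemma pow_low n r : (r < n)%N -> (Sp ^+ n)`_r = 0.
Proof.
have -> : Sp = 'X * (mu%:P + h%:P * 'X).
  rewrite /Sp; ring.
by rewrite exprMn coefXnM => ->.
Qed.

Definition cf (n : nat) : M := (n`!%:R)^-1 *: (1 : M).
Definition ES (N : nat) : {poly M} := \sum_(n < N) (cf n)%:P * Sp ^+ n.

Lemma E_ES N r : (r < N)%N -> fps_exp sfps r = (ES N)`_r.
Proof.
move=> rN; rewrite /fps_exp /ES coef_sum.
rewrite -(@sum_ext_zero _ r.+1 N (fun n => ((cf n)%:P * Sp ^+ n)`_r)) //.
  apply: eq_bigr => i _; rewrite pow_coef coefCM /cf -scalerAl mul1r //.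
by move=> i ri _; rewrite coefCM pow_low ?mulr0.
Qed.

Lemma Sp_deriv : Sp^`() = Gp mu (h *+ 2).
Proof.
rewrite /Sp /Gp derivD !deriv_mulC derivX derivXn /= mulr1 expr1.
by rewrite mulrnAr -mulrnAl polyCMn.
Qed.

Lemma cfS n : cf n.+1 *+ n.+1 = cf n.
Proof.
rewrite /cf scalerMnl; congr (_ *: _).
rewrite factS natrM invfM -mulr_natl mulrA mulfV ?mul1r //.
by rewrite pnatr_eq0.
Qed.

Lemma ES_deriv N : (ES N.+1)^`() = Gp mu (h *+ 2) * ES N.
Proof.
rewrite /ES raddf_sum big_ord_recl /= expr0 mulr1 derivC add0r.
rewrite mulr_sumr; apply: eq_bigr => i _.
rewrite deriv_mulC deriv_exp Sp_deriv /=.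
rewrite -mulrnAr mulrA [_%:P * Gp _ _]mulrC -mulrA; congr (_ * _).
by rewrite /bump /= add1n add0n mulrnAr -mulrnAl -polyCMn cfS.
Qed.

Definition Phi (q : {poly M}) : fps R d := fps_mul (fps_of_poly q) (fps_exp sfps).

Lemma Phi_ES q t N : (t < N)%N -> Phi q t = (q * ES N)`_t.
Proof.
move=> tN; rewrite /Phi /fps_mul coefM; apply: eq_bigr => i _.
rewrite /fps_of_poly (@E_ES N) //.
exact: leq_ltn_trans (leq_subr _ _) tN.
Qed.

Definition Dg (q : {poly M}) := q^`() + q * Gp mu (h *+ 2).

Lemma Phi_Dg q t : Phi (Dg q) t = Phi q t.+1 *+ t.+1.
Proof.
rewrite (@Phi_ES q t.+1 t.+2) // -coef_deriv derivM ES_deriv.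
rewrite /Dg coefD -!(@Phi_ES _ t t.+2) // mulrA -(@Phi_ES _ t t.+1) //.
by rewrite !(@Phi_ES _ t t.+1) // mulrDl coefD.
Qed.

Lemma Phi_mul a r t : Phi (a * r) t = \sum_(l < t.+1) a`_l * Phi r (t - l)%N.
Proof.
rewrite (@Phi_ES _ _ t.+1) // -mulrA coefM; apply: eq_bigr => l _.
by rewrite -(@Phi_ES _ _ t.+1) // ltnS leq_subr.
Qed.

Lemma Phi_Dgn q j t : Phi (iter j Dg q) t = Phi q (t + j)%N *+ (t + j)^_j.
Proof.
elim: j q t => [|j IH] q t; first by rewrite addn0 ffactn0.
by rewrite iterSr IH Phi_Dg -mulrnA addnS ffactSS.
Qed.

Lemma Phi_sum (I : Type) (r : seq I) (F : I -> {poly M}) t :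
  Phi (\sum_(i <- r) F i) t = \sum_(i <- r) Phi (F i) t.
Proof.
rewrite (@Phi_ES _ _ t.+1) // mulr_suml coef_sum; apply: eq_bigr => i _.
by rewrite -(@Phi_ES _ _ t.+1).
Qed.

Lemma Phi0 t : Phi 0 t = 0.
Proof. by rewrite (@Phi_ES _ _ t.+1) // mul0r coef0. Qed.
End Exp.

Section Ops.
Implicit Types (G : {poly M}) (C : {poly {poly M}}) (q r a b : {poly M}).
Definition Dgen (G : {poly M}) (q : {poly M}) := q^`() + q * G.
Definition step (G : {poly M}) (C : {poly {poly M}}) : {poly {poly M}} :=
  map_poly deriv C + C * 'X - G%:P * C.
Definition actP (G : {poly M}) (C : {poly {poly M}}) (q : {poly M}) :=
  \sum_(j < size C) C`_j * iter j (Dgen G) q.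

Lemma actP_bound G C q N : (size C <= N)%N ->
  actP G C q = \sum_(j < N) C`_j * iter j (Dgen G) q.
Proof.
move=> sN; rewrite /actP (@sum_ext_zero _ _ _ (fun j => C`_j * iter j (Dgen G) q) sN) //.
by move=> i si _; rewrite nth_default ?mul0r.
Qed.

Lemma actP_add G (C1 C2 : {poly {poly M}}) q : actP G (C1 + C2) q = actP G C1 q + actP G C2 q.
Proof.
set N := maxn (size C1) (size C2).
rewrite !(@actP_bound _ _ _ N) ?leq_maxl ?leq_maxr //; last first.
  by rewrite (leq_trans (size_add _ _)).
by rewrite -big_split /=; apply: eq_bigr => j _; rewrite coefD mulrDl.
Qed.

Lemma actP_opp G C q : actP G (- C) q = - actP G C q.
Proof.
rewrite /actP size_polyN -sumrN; apply: eq_bigr => j _.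
by rewrite coefN mulNr.
Qed.

Lemma actP_CM G a C q : actP G (a%:P * C) q = a * actP G C q.
Proof.
rewrite (@actP_bound _ _ _ (size C)) /actP ?mulr_sumr.
  by apply: eq_bigr => j _; rewrite coefCM mulrA.
apply/leq_sizeP => j hj; rewrite coefCM nth_default ?mulr0 //.
Qed.

Lemma actP_MX G C q : actP G (C * 'X) q = actP G C (Dgen G q).
Proof.
rewrite (@actP_bound _ _ _ (size C).+1) /actP; last first.
  apply/leq_sizeP => j hj; rewrite coefMX; case: j hj => //= j hj.
  by rewrite nth_default.
rewrite big_ord_recl coefMX /= mul0r add0r; apply: eq_bigr => j _.
by rewrite coefMX /bump /= ?add1n ?add0n -iterSr.
Qed.

Lemma Dgen_sum G (I : Type) (r : seq I) (F : I -> {poly M}) :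
  Dgen G (\sum_(i <- r) F i) = \sum_(i <- r) Dgen G (F i).
Proof. by rewrite /Dgen raddf_sum mulr_suml -big_split. Qed.

Lemma Dgen_mul G a b : Dgen G (a * b) = a^`() * b + a * Dgen G b.
Proof. by rewrite /Dgen derivM mulrDr mulrA addrA. Qed.

Lemma actP_mapderiv G C q :
  actP G (map_poly deriv C) q = \sum_(j < size C) (C`_j)^`() * iter j (Dgen G) q.
Proof.
rewrite (@actP_bound _ _ _ (size C)); last first.
  by apply/leq_sizeP => j hj; rewrite coef_map_id0 ?deriv0 // nth_default // deriv0.
by apply: eq_bigr => j _; rewrite coef_map_id0 ?deriv0.
Qed.

Lemma Dgen_actP G C q :
  Dgen G (actP G C q) = actP G (map_poly deriv C) q + actP G C (Dgen G q).
Proof.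
rewrite actP_mapderiv /actP Dgen_sum -big_split /=; apply: eq_bigr => j _.
by rewrite Dgen_mul -iterSr.
Qed.

Lemma actP_step (G' G : {poly M}) C q :
  actP G' (step G C) q = Dgen G' (actP G' C q) - G * actP G' C q.
Proof.
by rewrite /step actP_add actP_opp actP_CM actP_add actP_MX -Dgen_actP.
Qed.

Lemma actP1 G q : actP G 1 q = q.
Proof. by rewrite /actP size_poly1 big_ord1 coefC /= mul1r. Qed.

Lemma size_deriv_le (r : {poly M}) : (size r^`() <= size r)%N.
Proof.
by apply/leq_sizeP => j hj; rewrite coef_deriv nth_default ?mul0rn // ltnW.
Qed.

Lemma step_size (G' G : {poly M}) C q : (size G' <= 2)%N -> (size G <= 2)%N ->
  (size (actP G' (step G C) q) <= (size (actP G' C q)).+1)%N.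
Proof.
move=> hG' hG; rewrite actP_step /Dgen; set r := actP G' C q.
have hm (a b : {poly M}) : (size b <= 2)%N -> (size (a * b)%R <= (size a).+1)%N.
  move=> hb; apply: leq_trans (size_mul_leq _ _) _.
  lia.
apply: leq_trans (size_add _ _) _; rewrite size_opp geq_max; apply/andP; split.
  apply: leq_trans (size_add _ _) _; rewrite geq_max (hm _ _ hG') andbT.
  exact: leq_trans (size_deriv_le _) (leqnSn _).
by rewrite mulrC hm.
Qed.

Lemma iter_step_size (G' G : {poly M}) C q t : (size G' <= 2)%N -> (size G <= 2)%N ->
  (size (actP G' (iter t (step G) C) q) <= size (actP G' C q) + t)%N.
Proof.
move=> hG' hG; elim: t => [|t IH]; first by rewrite addn0.
by rewrite addnS /=; apply: (leq_trans (step_size _ _ hG' hG)); rewrite ltnS.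
Qed.

Lemma iter_step_same G C q t :
  actP G (iter t (step G) C) q = (actP G C q)^`(t).
Proof.
elim: t => [|t IH]; first by rewrite derivn0.
by rewrite /= actP_step IH /Dgen mulrC addrK.
Qed.

Lemma iter_step_zero (G' G : {poly M}) C q t : actP G' C q = 0 ->
  actP G' (iter t (step G) C) q = 0.
Proof.
move=> h0; elim: t => [|t IH] //=.
by rewrite actP_step IH /Dgen deriv0 !mul0r mulr0 addr0 subr0.
Qed.
End Ops.

Section Inv.
Implicit Types (C : {poly {poly M}}).

Lemma step_coef mu sig C j l : (step (Gp mu sig) C)`_j`_l =
  C`_j`_l.+1 *+ l.+1 + (if j is j'.+1 then C`_j'`_l else 0)
  - (mu * C`_j`_l + (if l is l'.+1 then sig * C`_j`_l' else 0)).
Proof.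
have -> : (step (Gp mu sig) C)`_j =
    (C`_j)^`() + (if j is j'.+1 then C`_j' else 0) - Gp mu sig * C`_j.
  rewrite /step [LHS]coefB [in LHS]coefD coef_map_id0 ?deriv0 // coefMX coefCM.
  by case: j.
rewrite coefB coefD coef_deriv /Gp mulrDl coefD coefCM -mulrA coefCM coefXM.
by case: j => [|j] /=; case: l => [|l] /=; rewrite ?coef0 ?mulr0.
Qed.

Definition supp C n := forall j l, (n < j + l)%N -> C`_j`_l = 0.
Definition hom C n := forall j l, (j + l <= n)%N -> C`_j`_l \is (n - j + l)%N.-homog.

Lemma supp_step mu sig C n : supp C n -> supp (step (Gp mu sig) C) n.+1.
Proof.
move=> hs j l hl; rewrite step_coef hs; last by lia.
rewrite hs; last by lia.
rewrite mul0rn mulr0 add0r.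
case: j hl => [|j] hl; case: l hl => [|l] hl; rewrite ?subrr ?add0r ?addr0 ?subr0 ?sub0r ?oppr0 //; rewrite !hs ?mulr0 ?subrr ?oppr0 //; lia.
Qed.

Lemma lead_step mu sig C n : supp C n -> C`_n`_0 = 1 ->
  (step (Gp mu sig) C)`_n.+1`_0 = 1.
Proof.
move=> hs h1; rewrite step_coef h1 !hs; try lia.
by rewrite mul0rn mulr0 add0r addr0 subr0.
Qed.

Lemma hom_step mu sig C n : mu \is 1.-homog -> sig \is 2.-homog ->
  supp C n -> hom C n -> hom (step (Gp mu sig) C) n.+1.
Proof.
move=> hmu hsig hs hh j l hl; rewrite step_coef.
apply: rpredB; [apply: rpredD | apply: rpredD].
- have [h|h] := leqP (j + l.+1) n.
    have -> : (n.+1 - j + l = n - j + l.+1)%N by lia.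
    by apply: rpredMn; apply: hh.
  by rewrite hs // mul0rn rpred0.
- case: j hl => [|j] hl; first exact: rpred0.
  have -> : (n.+1 - j.+1 + l = n - j + l)%N by lia.
  by apply: hh; lia.
- have [h|h] := leqP (j + l) n.
    have -> : (n.+1 - j + l = 1 + (n - j + l))%N by lia.
    by apply: dhomogM => //; apply: hh.
  by rewrite hs // mulr0 rpred0.
- case: l hl => [|l] hl; first exact: rpred0.
  have -> : (n.+1 - j + l.+1 = 2 + (n - j + l))%N by lia.
  by apply: dhomogM => //; apply: hh; lia.
Qed.
End Inv.

Section Simple.
Variable S : seq M.
Implicit Types Q : M.

Lemma simple0 A B : simple A B S 0.
Proof. by exists [::]; split => //; rewrite big_nil. Qed.

Lemma simple1 A B : (0 < A)%N -> simple A B S 1.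
Proof.
move=> hA; exists [:: (1, [::])]; split => //=; rewrite ?andbT ?normr1 ?ler1n //.
by rewrite big_seq1 big_nil scale1r.
Qed.

Lemma simple_mono A B A' B' Q : (A <= A')%N -> (B <= B')%N ->
  simple A B S Q -> simple A' B' S Q.
Proof.
move=> hA hB [ts [h1 h2 h3 h4]]; exists ts; split => //.
- exact: leq_trans hA.
- apply/allP => t /(allP h2) /le_trans; apply; by rewrite ler_nat.
- by apply/allP => t /(allP h3) /leq_trans; apply.
Qed.

Lemma simpleD A1 A2 B Q1 Q2 : simple A1 B S Q1 -> simple A2 B S Q2 ->
  simple (A1 + A2) B S (Q1 + Q2).
Proof.
move=> [t1 [h1 h2 h3 h4]] [t2 [g1 g2 g3 g4]]; exists (t1 ++ t2); split.
- by rewrite size_cat leq_add.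
- rewrite all_cat; apply/andP; split.
    apply/allP => t /(allP h2) /le_trans; apply; by rewrite ler_nat leq_addr.
  apply/allP => t /(allP g2) /le_trans; apply; by rewrite ler_nat leq_addl.
- by rewrite all_cat h3 g3.
- by rewrite big_cat h4 g4.
Qed.

Lemma simpleN A B Q : simple A B S Q -> simple A B S (- Q).
Proof.
move=> [ts [h1 h2 h3 h4]]; exists [seq (- t.1, t.2) | t <- ts]; split.
- by rewrite size_map.
- by rewrite all_map; apply/allP => t /(allP h2) /=; rewrite normrN.
- by rewrite all_map.
- by rewrite h4 big_map -sumrN; apply: eq_bigr => t _; rewrite scaleNr.
Qed.

Lemma simpleMn A B Q n : simple A B S Q -> simple (A * n.+1) B S (Q *+ n.+1).
Proof.
move=> [ts [h1 h2 h3 h4]]; exists [seq (t.1 *+ n.+1, t.2) | t <- ts]; split.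
- by rewrite size_map (leq_trans h1) // leq_pmulr.
- rewrite all_map; apply/allP => t /(allP h2) /= ht.
  by rewrite normrMn natrM -[X in X <= _]mulr_natr ler_pM2r ?ltr0n.
- by rewrite all_map.
- by rewrite h4 big_map -sumrMnl; apply: eq_bigr => t _; rewrite scalerMnl.
Qed.

Lemma simpleM A B Q (i : 'I_(size S)) : simple A B S Q -> simple A B.+1 S (S`_i * Q).
Proof.
move=> [ts [h1 h2 h3 h4]]; exists [seq (t.1, i :: t.2) | t <- ts]; split.
- by rewrite size_map.
- by rewrite all_map.
- by rewrite all_map; apply/allP => t /(allP h3).
- rewrite h4 big_map mulr_sumr; apply: eq_bigr => t _.
  by rewrite big_cons scalerAr.
Qed.
End Simple.

Lemma simp_step (S : seq M) (i1 i2 : 'I_(size S)) (C : {poly {poly M}}) n a b :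
  supp C n -> (forall j l, simple a b S C`_j`_l) ->
  forall j l, simple (a * n.+3) b.+1 S (step (Gp S`_i1 S`_i2) C)`_j`_l.
Proof.
move=> hs hC j l; rewrite step_coef.
apply: (simple_mono (A := a * n + a + (a + a)) (B := b.+1)) => //.
  by rewrite !mulnS; lia.
apply: simpleD; last apply: simpleN; apply: simpleD.
- have [h|h] := leqP l.+1 n.
    apply: (simple_mono (A := a * l.+1) (B := b)) => //; first by rewrite leq_mul2l h orbT.
    exact: simpleMn.
  by rewrite hs ?mul0rn; [apply: simple0 | lia].
- case: j => [|j]; first exact: simple0.
  by apply: (simple_mono (A := a) (B := b)).
- exact: simpleM.
- case: l => [|l]; first exact: simple0.
  exact: simpleM.
Qed.

Lemma mmap1_subst (mm : 'X_{1..d}) :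
  mmap1 (fun i : 'I_d => 'X_i *: ('X : {poly M})) mm =
  (\prod_(i < d) ('X_i : M) ^+ (mm i))%:P * 'X^(mdeg mm).
Proof.
rewrite /mmap1 mdegE -prodrXr rmorph_prod -big_split /=.
by apply: eq_bigr => i _; rewrite -mul_polyC exprMn rmorphXn.
Qed.

Lemma size_subst (P : M) m : (msize P <= m.+1)%N -> (size (subst_Xy P) <= m.+1)%N.
Proof.
move=> hP; apply/leq_sizeP => j hj.
rewrite /subst_Xy /mmap coef_sum big1_seq // => mm /= hmm.
rewrite mmap1_subst !coefCM coefXn.
have : (mdeg mm < msize P)%N by apply: msize_mdeg_lt.
by move=> h; rewrite (_ : (j == mdeg mm) = false) ?mulr0 //; apply/negbTE; lia.
Qed.

Lemma muX_homog (v : 'cV[R]_d) : muX v \is 1.-homog.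
Proof.
apply: rpred_sum => i _; apply: rpredZ.
by rewrite dhomogX /= mdeg1.
Qed.

Lemma SigmaX_homog (Sg : 'M[R]_d) : SigmaX Sg \is 2.-homog.
Proof.
apply: rpred_sum => i _; apply: rpred_sum => j _; apply: rpredZ.
by rewrite -[2%N]/(1+1)%N; apply: dhomogM; rewrite dhomogX /= mdeg1.
Qed.

Lemma size_Gp mu sig : (size (Gp mu sig) <= 2)%N.
Proof.
apply/leq_sizeP => j hj; rewrite /Gp coefD coefCM coefX coefC.
by case: j hj => [|[|j]] //= _; rewrite mulr0 addr0.
Qed.

Lemma nth_flat2 (I : Type) (a b : I -> M) (s : seq I) (i0 : I) i :
  (i < size s)%N ->
  (flatten [seq [:: a j; b j] | j <- s])`_(i.*2) = a (nth i0 s i) /\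
  (flatten [seq [:: a j; b j] | j <- s])`_(i.*2.+1) = b (nth i0 s i).
Proof.
elim: s i => [|x s IH] [|i] //= hi.
exact: IH.
Qed.

Lemma size_flat2 (I : Type) (a b : I -> M) (s : seq I) :
  size (flatten [seq [:: a j; b j] | j <- s]) = (size s).*2.
Proof. by elim: s => //= x s IH; rewrite IH doubleS. Qed.

Fixpoint Afun (n : nat) : nat := if n is n'.+1 then (Afun n' * n'.+3)%N else 1%N.

Section Cons.
Variables (k m : nat) (mu : 'I_k -> 'cV[R]_d) (Sig : 'I_k -> 'M[R]_d).
Local Notation S := (gauss_family mu Sig).

Lemma size_S : size S = k.*2.
Proof. by rewrite /gauss_family size_flat2 size_enum_ord. Qed.

Definition im (i : 'I_k) : 'I_(size S).
Proof. apply: (@Ordinal _ (i.*2)); rewrite size_S ltn_double; exact: ltn_ord. Defined.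
Definition is_ (i : 'I_k) : 'I_(size S).
Proof. apply: (@Ordinal _ (i.*2.+1)); rewrite size_S ltn_Sdouble; exact: ltn_ord. Defined.

Lemma S_im i : S`_(im i) = muX (mu i).
Proof.
have := (@nth_flat2 _ (fun j => muX (mu j)) (fun j => SigmaX (Sig j)) (enum 'I_k) i i).
by rewrite size_enum_ord nth_ord_enum => /(_ (ltn_ord i)) [].
Qed.

Lemma S_is i : S`_(is_ i) = SigmaX (Sig i).
Proof.
have := (@nth_flat2 _ (fun j => muX (mu j)) (fun j => SigmaX (Sig j)) (enum 'I_k) i i).
by rewrite size_enum_ord nth_ord_enum => /(_ (ltn_ord i)) [].
Qed.

Definition Gi (i : 'I_k) : {poly M} := Gp (muX (mu i)) (SigmaX (Sig i)).

Definition Inv (C : {poly {poly M}}) n :=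
  [/\ supp C n, hom C n, C`_n`_0 = 1 & forall j l, simple (Afun n) n S C`_j`_l].

Lemma Inv1 : Inv 1 0.
Proof.
split.
- move=> j l hl; rewrite coefC; case: j hl => [|j] hl /=; last by rewrite coef0.
  by rewrite coefC; case: l hl.
- move=> j l hl; have [-> ->] : j = 0%N /\ l = 0%N by lia.
  rewrite !coefC /=; exact: dhomog1.
- by rewrite !coefC.
- move=> j l; rewrite coefC; case: (j == 0%N); last first.
    by rewrite coef0; exact: (simple0 S (Afun 0) 0).
  rewrite coefC; case: (l == 0%N); first exact: (@simple1 S 1 0 (ltn0Sn 0)).
  exact: (simple0 S (Afun 0) 0).
Qed.

Lemma Inv_step i C n : Inv C n -> Inv (step (Gi i) C) n.+1.
Proof.
move=> [h1 h2 h3 h4]; split.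
- exact: supp_step.
- by apply: hom_step => //; [exact: muX_homog | exact: SigmaX_homog].
- exact: lead_step.
- move=> j l; rewrite /Gi -S_im -S_is.
  exact: (simp_step (im i) (is_ i) h1 h4).
Qed.

Lemma Inv_iter i C n t : Inv C n -> Inv (iter t (step (Gi i)) C) (n + t).
Proof.
move=> h; elim: t => [|t IH]; first by rewrite addn0.
by rewrite addnS; apply: Inv_step.
Qed.

Definition consF (st : {poly {poly M}} * nat) (i : 'I_k) :=
  (iter (m.+1 + st.2) (step (Gi i)) st.1, (st.2 + (m.+1 + st.2))%N).
Definition Cons (s : seq 'I_k) := foldl consF (1, 0%N) s.

Lemma Cons_prop (s : seq 'I_k) :
  [/\ (Cons s).2 = (m.+1 * (2 ^ (size s) - 1))%N,
      Inv (Cons s).1 (Cons s).2,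
      (forall i (p : {poly M}), i \in s -> (size p <= m.+1)%N -> actP (Gi i) (Cons s).1 p = 0) &
      (forall (G p : {poly M}), (size G <= 2)%N -> (size (actP G (Cons s).1 p) <= size p + (Cons s).2)%N)].
Proof.
elim/last_ind: s => [|s i [IH1 IH2 IH3 IH4]].
  split => //=; [by rewrite muln0 | exact: Inv1 | by move=> G p _; rewrite actP1 addn0].
rewrite /Cons foldl_rcons -/(Cons s) /consF.
set C := (Cons s).1; set n := (Cons s).2 in IH1 IH2 IH3 IH4 *.
split.
- rewrite IH1 size_rcons expnS.
  have : (0 < 2 ^ size s)%N by rewrite expn_gt0.
  rewrite /=; case: (2 ^ size s)%N => // y _.
  have e1 : (y.+1 - 1 = y)%N by lia.
  have e2 : (2 * y.+1 - 1 = (2 * y).+1)%N by lia.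
  rewrite e1 e2; nia.
- exact: Inv_iter.
- move=> i' p; rewrite mem_rcons inE => /orP [/eqP -> | hi] hp.
    rewrite iter_step_same derivn_poly0 //.
    by apply: (leq_trans (IH4 _ _ (size_Gp _ _))); rewrite leq_add2r.
  by apply: iter_step_zero; apply: IH3.
- move=> G p hG; apply: (leq_trans (iter_step_size _ _ _ hG (size_Gp _ _))).
  by move: (IH4 G p hG); rewrite -/C /=; lia.
Qed.
End Cons.

Lemma fact_scale (x : M) n j :
  ((n`!%:R : R)^-1) *: ((n + j)%N`!%:R *: x) = x *+ (n + j)^_j.
Proof.
have e : ((n + j)^_j * n`!)%N = (n + j)`!.
  by rewrite -{2}(addnK j n) ffact_fact // leq_addl.
rewrite scalerA -e natrM mulrCA mulVf ?mulr1 ?scaler_nat //.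
by rewrite pnatr_eq0 -lt0n fact_gt0.
Qed.

Lemma supp_size (C : {poly {poly M}}) n : supp C n -> (size C <= n.+1)%N.
Proof.
move=> hs; apply/leq_sizeP => j hj; apply/polyP => l.
by rewrite coef0 hs //; lia.
Qed.
End Part1.

Unset Implicit Arguments.
Set Strict Implicit.

Theorem lemma5p4 (k m : nat) (hk : (0 < k)%N) (hm : (0 < m)%N) :
  exists A B : nat,
  forall (d : nat) (R : realType) (mu : 'I_k -> 'cV[R]_d) (Sig : 'I_k -> 'M[R]_d)
         (P : 'I_k -> {mpoly R[d]}),
    (* N(mu_j, I + Sigma_j) is a Gaussian: covariance symmetric PSD *)
    (forall j, (Sig j)^T = Sig j) ->
    (forall j (v : 'cV[R]_d), 0 <= (v^T *m (1%:M + Sig j) *m v) ord0 ord0) ->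
    (forall j, (msize (P j) <= m.+1)%N) ->
    let kappa := (m.+1 * (2 ^ k - 1))%N in
    exists Rp : nat -> nat -> {mpoly R[d]},
      [/\ (forall j l, (j <= kappa)%N -> (l <= kappa - j)%N ->
             Rp j l \is (kappa - j + l)%N.-homog),
          Rp kappa 0%N = 1,
          (forall j l, (j <= kappa)%N -> (l <= kappa - j)%N ->
             simple A B (gauss_family mu Sig) (Rp j l)) &
          (forall a : nat, (kappa <= a)%N ->
             \sum_(j < kappa.+1) \sum_(l < (kappa - j).+1)
               (if (l <= a - kappa)%N
                then ((a - kappa - l)`!%:R)^-1 *:
                       (fcoef mu Sig P (a - kappa - l + j) * Rp j l)
                else 0) = 0)].
Proof.
exists (Afun (m.+1 * (2 ^ k - 1))), (m.+1 * (2 ^ k - 1))%N.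
move=> d R mu Sig P _ _ hP kappa.
have [e1 [hs hh hl hsim] h3 h4] := Cons_prop m mu Sig (enum 'I_k).
rewrite size_enum_ord -/kappa in e1.
rewrite e1 in hs hh hl hsim h4.
set C := (Cons m mu Sig (enum 'I_k)).1 in hs hh hl hsim h3 h4.
exists (fun j l => C`_j`_l); split.
- by move=> j l hj hl'; apply: hh; lia.
- exact: hl.
- by move=> j l _ _; apply: hsim.
move=> a ha; set t0 := (a - kappa)%N.
pose Ph (i : 'I_k) := Phi (muX (mu i)) (2^-1 *: SigmaX (Sig i)).
pose p (i : 'I_k) := subst_Xy (P i).
have hG i : Gi mu Sig i = Gp (muX (mu i)) ((2^-1 *: SigmaX (Sig i)) *+ 2).
  rewrite /Gi scalerMnl -mulr_natr mulVf ?scale1r //.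
  by rewrite pnatr_eq0.
have hz i : Ph i (actP (Gi mu Sig i) C (p i)) t0 = 0.
  rewrite h3 ?mem_enum //; [exact: Phi0 | exact: (size_subst (hP i))].
have key i : Ph i (actP (Gi mu Sig i) C (p i)) t0 =
    \sum_(j < kappa.+1) \sum_(l < t0.+1)
       C`_j`_l * (Ph i (p i) (t0 - l + j)%N *+ (t0 - l + j)^_j).
  rewrite (actP_bound _ _ (supp_size hs)) /Ph Phi_sum; apply: eq_bigr => j _.
  rewrite Phi_mul; apply: eq_bigr => l _.
  rewrite hG (_ : Dgen _ = Dg (muX (mu i)) (2^-1 *: SigmaX (Sig i))) //.
  by rewrite Phi_Dgn.
have hf r : fseries mu Sig P r = \sum_(i < k) Ph i (p i) r by [].
have inner (j : 'I_kappa.+1) :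
    \sum_(l < (kappa - j).+1)
      (if (l <= t0)%N then ((t0 - l)`!%:R)^-1 *:
          (fcoef mu Sig P (t0 - l + j) * C`_j`_l) else 0) =
    \sum_(l < t0.+1) \sum_(i < k)
       C`_j`_l * (Ph i (p i) (t0 - l + j)%N *+ (t0 - l + j)^_j).
  pose F := fun l : nat => (if (l <= t0)%N then ((t0 - l)`!%:R)^-1 *:
          (fcoef mu Sig P (t0 - l + j) * C`_j`_l) else 0).
  transitivity (\sum_(l < (kappa + t0).+1) F l).
    apply: (@sum_ext_zero _ _ _ F); first by lia.
    move=> l hl0 _; rewrite /F hs ?mulr0 ?scaler0; last by have := ltn_ord j; lia.
    by case: ifP.
  symmetry; transitivity (\sum_(l < t0.+1) F l).
    apply: eq_bigr => l _; rewrite /F -ltnS ltn_ord /fcoef -scalerAl fact_scale.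
    rewrite hf mulr_suml -sumrMnl; apply: eq_bigr => i _.
    by rewrite mulrnAr [C`_j`_l * _]mulrC.
  apply: (@sum_ext_zero _ _ _ F); first by lia.
  by move=> l hl0 _; rewrite /F leqNgt hl0.
rewrite (eq_bigr _ (fun j _ => inner j)).
rewrite (eq_bigr _ (fun j _ => exchange_big _ _ _ _ _ _)) /= exchange_big /=.
by rewrite big1 // => i _; rewrite -key hz.
Qed.
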